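(* Let $m \geq 2$, let $X_1, \dots, X_m, Y, Z$ be arbitrary sets, let $\Delta \subseteq X_1 \times \cdots \times X_m \times Y$, and let $f_1, \dots, f_m : \Delta \to Z$ be functions. Suppose $\Gamma \subseteq \Delta$ is a nonempty subset such that, on $\Gamma$, each function $f_i$ ($1 \leq i \leq m$) does not depend on $x_j \in X_j$ for all $1 \leq j \leq m$, $j \neq i$. Then there exists a subset $\bar\Gamma$ with $\Gamma \subseteq \bar\Gamma \subseteq \Delta$ such that, on $\bar\Gamma$, each $f_i$ ($1 \leq i \leq m$) does not depend on $x_j \in X_j$ for all $1 \leq j \leq m$, $j \neq i$, and $\bar\Gamma$ is maximal with respect to inclusion among subsets of $\Delta$ containing $\Gamma$ that have this property.
   Context: For a subset $\Gamma \subseteq \Delta \subseteq X_1 \times \cdots \times X_m \times Y$ and functions $f_1,\dots,f_m:\Delta \to Z$, one says that ''on $\Gamma$, each $f_i$ ($1\le i\le m$) does not depend on $x_j \in X_j$ for $1 \le j \le m$, $j \ne i$'' if and only if there exist functions $g_i : pr_{X_i \times Y}(\Gamma) \to Z$, $1 \leq i \leq m$, such that $f_i|_\Gamma = g_i \circ pr_{X_i \times Y}|_\Gamma$ for every $1 \leq i \leq m$. Here $pr_{X_i \times Y} : X_1 \times \cdots \times X_m \times Y \to X_i \times Y$ denotes the projection $(x_1, \dots, x_m, y) \mapsto (x_i, y)$. *)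

(* Defs.v *)
From mathcomp Require Import all_boot.
Set Implicit Arguments. Unset Strict Implicit. Unset Printing Implicit Defensive.

Definition ambient (m : nat) (X : 'I_m -> Type) (Y : Type) : Type :=
  ((forall i : 'I_m, X i) * Y)%type.

Definition pr (m : nat) (X : 'I_m -> Type) (Y : Type) (i : 'I_m)
  (p : ambient X Y) : (X i * Y)%type := (p.1 i, p.2).

Definition pr_image (m : nat) (X : 'I_m -> Type) (Y : Type) (i : 'I_m)
  (Gamma : ambient X Y -> Prop) : Type :=
  { u : (X i * Y)%type | exists p, Gamma p /\ pr i p = u }.

(* "On Gamma (a subset of Delta), each f_i does not depend on x_j, j <> i":
   Gamma is contained in Delta and there are g_i : pr_{X_i x Y}(Gamma) -> Z
   with f_i|_Gamma = g_i o pr_{X_i x Y}|_Gamma for every i. *)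
Definition indep_on (m : nat) (X : 'I_m -> Type) (Y Z : Type)
  (Delta : ambient X Y -> Prop)
  (f : 'I_m -> {p : ambient X Y | Delta p} -> Z)
  (Gamma : ambient X Y -> Prop) : Prop :=
  exists HGD : (forall p, Gamma p -> Delta p),
  exists g : (forall i : 'I_m, pr_image i Gamma -> Z),
  forall (i : 'I_m) (p : ambient X Y) (hp : Gamma p),
    f i (exist _ p (HGD p hp))
    = g i (exist _ (pr i p) (ex_intro _ p (conj hp erefl))).

(* Main.v *)
Require Import Defs.
From mathcomp Require Import all_boot.
From mathcomp Require Import boolp classical_sets.
From Stdlib Require Import ProofIrrelevance.
Set Implicit Arguments. Unset Strict Implicit.
Local Open Scope classical_set_scope.

Section Aux.
Variables (m : nat) (X : 'I_m -> Type) (Y Z : Type)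
  (Delta : ambient X Y -> Prop)
  (f : 'I_m -> {p : ambient X Y | Delta p} -> Z).

Definition pw (G : ambient X Y -> Prop) : Prop :=
  forall i p q, G p -> G q -> pr i p = pr i q ->
  forall hp hq, f i (exist _ p hp) = f i (exist _ q hq).

Lemma indep_pw G : indep_on f G -> pw G.
Proof.
move=> [HGD [g Hg]] i p q Gp Gq epq hp hq.
have -> : exist _ p hp = exist Delta p (HGD p Gp) by exact: eq_exist.
have -> : exist _ q hq = exist Delta q (HGD q Gq) by exact: eq_exist.
rewrite !Hg; congr (g i _).
exact: eq_exist.
Qed.

Lemma pw_indep G : (forall p, G p -> Delta p) -> pw G -> indep_on f G.
Proof.
move=> HGD Hpw; exists HGD.
pose g i (u : pr_image i G) : Z :=
  let w := cid (proj2_sig u) in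
  f i (exist _ (proj1_sig w) (HGD _ (proj1 (proj2_sig w)))).
exists g => i p hp; rewrite /g /=.
case: (cid _) => q [Gq eq] /=.
by apply: Hpw => //.
Qed.

Lemma pw_sub G G' : (forall p, G' p -> G p) -> pw G -> pw G'.
Proof. by move=> s H i p q Gp Gq; apply: H; apply: s. Qed.
End Aux.

Theorem mainTheorem1 (m : nat) (hm : 2 <= m) (X : 'I_m -> Type) (Y Z : Type)
  (Delta : ambient X Y -> Prop)
  (f : 'I_m -> {p : ambient X Y | Delta p} -> Z)
  (Gamma : ambient X Y -> Prop)
  (hGD : forall p, Gamma p -> Delta p)
  (hne : exists p, Gamma p)
  (hG : indep_on f Gamma) :
  exists Gbar : ambient X Y -> Prop,
    (forall p, Gamma p -> Gbar p) /\
    (forall p, Gbar p -> Delta p) /\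
    indep_on f Gbar /\
    (forall G' : ambient X Y -> Prop,
       (forall p, Gamma p -> G' p) ->
       (forall p, G' p -> Delta p) ->
       indep_on f G' ->
       (forall p, Gbar p -> G' p) ->
       forall p, G' p -> Gbar p).
Proof.
have pwG := indep_pw hG.
pose P (G : set (ambient X Y)) :=
  pw f (fun p => Gamma p \/ G p) /\ (forall p, G p -> Delta p).
have [A [[PA1 PA2] Amax]] : exists A, P A /\ forall B, A `<` B -> ~ P B.
  apply: Zorn_bigcup => F FP Ftot; split; last first.
    by move=> p [S FS Sp]; apply: (proj2 (FP _ FS)).
  move=> i p q Hp Hq.
  suff [S [PS [Sp Sq]]] : exists S, P S /\ (Gamma p \/ S p) /\ (Gamma q \/ S q).
    by apply: (proj1 PS).
  case: Hp => [Gp|[S1 FS1 S1p]]; case: Hq => [Gq|[S2 FS2 S2q]].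
  - exists set0; split; last by split; left.
    split; last by [].
    by apply: pw_sub pwG => x [|].
  - by exists S2; split; [apply: FP|split; [left|right]].
  - by exists S1; split; [apply: FP|split; [right|left]].
  - case: (Ftot _ _ FS1 FS2) => sub.
    + by exists S2; split; [apply: FP|split; right => //; apply: sub].
    + by exists S1; split; [apply: FP|split; right => //; apply: sub].
have DG : forall p, Gamma p \/ A p -> Delta p by move=> p [/hGD|/PA2].
exists (fun p => Gamma p \/ A p); split; first by move=> p; left.
split; first exact: DG.
split; first exact: pw_indep.
move=> G' GG' G'D hG' sub p G'p.
apply: contrapT => npA.
have pwG' := indep_pw hG'.
apply: (Amax G').
  split; first by move=> x Ax; apply: sub; right.
  move=> e; apply: npA; right; exact: e.
split; last exact: G'D.
by apply: pw_sub pwG' => x [/GG'|].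
Qed.
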